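(* Let $\Gamma$ be a connected finite simple graph on $N\ge3$ vertices with $\varepsilon>\frac12$. If $u\ne v$ are vertices with $\mathcal N(u)\cap\mathcal N(v)\ne\emptyset$, then $\mathcal N(u)\triangle\mathcal N(v)\ne\emptyset$ and $$\sum_{w\in\mathcal N(u)\triangle\mathcal N(v)}\Big(\frac{1}{\deg w}-\frac14\Big)>\frac12.$$
   Context: For a finite simple graph $\Gamma=(V,E)$ without isolated vertices, $\deg v$ is the number of neighbours of $v$ and $\mathcal N(v)=\{w\in V: w\sim v\}$; $\triangle$ denotes symmetric difference of sets. The normalized Laplacian acts on functions $f:V\to\mathbb R$ by $\Delta f(v)=f(v)-\frac{1}{\deg v}\sum_{w\sim v}f(w)$; its eigenvalues are $0=\lambda_1\le\lambda_2\le\dots\le\lambda_N$, and $\varepsilon:=\min_i|1-\lambda_i|$. *)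

(* Defs.v *)
From HB Require Import structures.
From mathcomp Require Import all_boot all_order all_algebra.
From mathcomp Require Import reals.
Set Implicit Arguments. Unset Strict Implicit. Unset Printing Implicit Defensive.
Import Order.TTheory GRing.Theory Num.Theory.
Local Open Scope ring_scope.

Section Graph.
Variable n : nat.
Variable adj : rel 'I_n.

Definition simple_graph : Prop := symmetric adj /\ irreflexive adj.

Definition connected_graph : Prop := forall u v : 'I_n, connect adj u v.

Definition nbhd (v : 'I_n) : {set 'I_n} := [set w | adj v w].
Definition deg (v : 'I_n) : nat := #|nbhd v|.

Definition symdiff (A B : {set 'I_n}) : {set 'I_n} := (A :\: B) :|: (B :\: A).

Variable R : realType.

Definition norm_laplacian (f : 'I_n -> R) (v : 'I_n) : R :=
  f v - (deg v)%:R^-1 * \sum_(w in nbhd v) f w.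

Definition lap_eigenvalue (lam : R) : Prop :=
  exists f : 'I_n -> R, (exists v, f v != 0) /\
    forall v, norm_laplacian f v = lam * f v.
End Graph.

(* Main.v *)
From HB Require Import structures.
From mathcomp Require Import all_boot all_order all_algebra.
From mathcomp Require Import all_classical all_reals all_analysis.
From mathcomp Require Import ring lra zify.
Require Import Defs.
Set Implicit Arguments. Unset Strict Implicit. Unset Printing Implicit Defensive.
Import Order.TTheory GRing.Theory Num.Theory.
Local Open Scope ring_scope.
Import numFieldNormedType.Exports.

Definition Pf (R : realType) n (adj : rel 'I_n) (f : 'I_n -> R) w : R :=
  (deg adj w)%:R^-1 * \sum_(x in nbhd adj w) f x.
Definition nrm (R : realType) n (adj : rel 'I_n) (f : 'I_n -> R) : R :=
  \sum_w (deg adj w)%:R * f w ^+ 2.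
Definition qf (R : realType) n (adj : rel 'I_n) (f : 'I_n -> R) : R :=
  \sum_w (deg adj w)%:R * Pf adj f w ^+ 2.

Lemma Pf_lin (R : realType) n (adj : rel 'I_n) (f g : 'I_n -> R) (t : R) w :
  Pf adj (fun i => f i + t * g i) w = Pf adj f w + t * Pf adj g w.
Proof.
rewrite /Pf big_split /= -mulr_sumr; ring.
Qed.

Lemma wsum_expand (R : realType) n (d a b : 'I_n -> R) (t : R) :
  \sum_w d w * (a w + t * b w) ^+ 2 =
  \sum_w d w * a w ^+ 2 + 2 * t * \sum_w d w * (a w * b w)
    + t ^+ 2 * \sum_w d w * b w ^+ 2.
Proof.
rewrite !mulr_sumr -!big_split /=; apply: eq_bigr => w _; ring.
Qed.

Lemma nrm_ge0 (R : realType) n (adj : rel 'I_n) f : 0 <= nrm (R:=R) adj f.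
Proof. by apply: sumr_ge0 => w _; rewrite mulr_ge0 // sqr_ge0. Qed.

Lemma qf_ge0 (R : realType) n (adj : rel 'I_n) f : 0 <= qf (R:=R) adj f.
Proof. by apply: sumr_ge0 => w _; rewrite mulr_ge0 // sqr_ge0. Qed.

Lemma nrm_scale (R : realType) n (adj : rel 'I_n) (f : 'I_n -> R) c :
  nrm adj (fun i => c * f i) = c ^+ 2 * nrm adj f.
Proof. rewrite /nrm mulr_sumr; apply: eq_bigr => w _; ring. Qed.

Lemma qf_scale (R : realType) n (adj : rel 'I_n) (f : 'I_n -> R) c :
  qf adj (fun i => c * f i) = c ^+ 2 * qf adj f.
Proof.
rewrite /qf mulr_sumr; apply: eq_bigr => w _.
have -> : Pf adj (fun i => c * f i) w = c * Pf adj f w.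
  by rewrite /Pf -mulr_sumr; ring.
ring.
Qed.

Lemma lin_quad0 (R : realType) (a b : R) :
  (forall t, 0 <= a * t + b * t ^+ 2) -> a = 0.
Proof.
move=> H.
have Hb : 0 <= `|b| by [].
pose s := (`|b| + 1)^-1.
have s0 : 0 < s by rewrite invr_gt0; lra.
have Hs : `|b| * s < 1.
  rewrite /s ltr_pdivrMr; last lra. lra.
have := H (- a * s).
have : b <= `|b| := ler_norm b.
move=> hb h.
have : a ^+ 2 * s * (1 - b * s) <= 0.
  have -> : a ^+ 2 * s * (1 - b * s) = - (a * (- a * s) + b * (- a * s) ^+ 2) by ring.
  by rewrite oppr_le0.
have h1 : 0 < 1 - b * s.
  have : b * s <= `|b| * s by rewrite ler_wpM2r // ltW.
  lra.
move=> h2.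
have : a ^+ 2 * s <= 0.
  by rewrite -(pmulr_lle0 _ h1).
rewrite pmulr_lle0 // => ha.
by apply/eqP; rewrite -sqrf_eq0 eq_le ha sqr_ge0.
Qed.

Local Open Scope classical_set_scope.

Lemma cont_cst (R : realType) n (c : R) : continuous (fun _ : 'rV[R]_n => c).
Proof. exact: cst_continuous. Qed.

Lemma cont_mul (R : realType) n (f g : 'rV[R]_n -> R) :
  continuous f -> continuous g -> continuous (fun v => f v * g v).
Proof. by move=> hf hg x; exact: (continuousM (hf x) (hg x)). Qed.

Lemma cont_add (R : realType) n (f g : 'rV[R]_n -> R) :
  continuous f -> continuous g -> continuous (fun v => f v + g v).
Proof. by move=> hf hg x; exact: (continuousD (hf x) (hg x)). Qed.

Lemma cont_sum (R : realType) n (I : finType) (P : pred I) (F : I -> 'rV[R]_n -> R) :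
  (forall i, continuous (F i)) -> continuous (fun v => \sum_(i | P i) F i v).
Proof.
move=> HF.
suff H : forall s : seq I, continuous (fun v => \sum_(i <- s | P i) F i v) by exact: H.
elim => [|i s IH].
  have -> : (fun v => \sum_(i <- [::] | P i) F i v) = fun=> 0.
    by apply: funext => v; rewrite big_nil.
  exact: cont_cst.
have -> : (fun v => \sum_(j <- i :: s | P j) F j v) =
    (fun v => (if P i then F i v else 0) + \sum_(j <- s | P j) F j v).
  by apply: funext => v; rewrite big_cons; case: (P i); rewrite ?add0r.
apply: cont_add => //; case: (P i) => //; exact: cont_cst.
Qed.

Lemma cont_coord (R : realType) n (i : 'I_n) : continuous (fun v : 'rV[R]_n => v ord0 i).
Proof. exact: coord_continuous. Qed.

Lemma cont_N (R : realType) n (adj : rel 'I_n) :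
  continuous (fun v : 'rV[R]_n => nrm adj (fun i => v ord0 i)).
Proof.
apply: cont_sum => w; apply: cont_mul; first exact: cont_cst.
rewrite /GRing.exp /=; apply: cont_mul; exact: cont_coord.
Qed.

Lemma cont_Q (R : realType) n (adj : rel 'I_n) :
  continuous (fun v : 'rV[R]_n => qf adj (fun i => v ord0 i)).
Proof.
apply: cont_sum => w; apply: cont_mul; first exact: cont_cst.
have HP : continuous (fun v : 'rV[R]_n => Pf adj (fun i => v ord0 i) w).
  apply: cont_mul; first exact: cont_cst.
  by apply: cont_sum => x; exact: cont_coord.
rewrite /GRing.exp /=; exact: cont_mul.
Qed.

Lemma in_box (R : realType) n (adj : rel 'I_n) (Hdeg : forall w, (0 < deg adj w)%N)
  (f : 'I_n -> R) : nrm adj f = 1 -> forall i, -1 <= f i <= 1.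
Proof.
move=> Hn i.
have h1 : (deg adj i)%:R * f i ^+ 2 <= 1.
  rewrite -[X in _ <= X]Hn /nrm (bigD1 i) //= lerDl.
  by apply: sumr_ge0 => w _; rewrite mulr_ge0 // sqr_ge0.
have h2 : 1 <= (deg adj i)%:R :> R by rewrite ler1n Hdeg.
have h3 : 0 <= f i ^+ 2 := sqr_ge0 _.
have h4 : f i ^+ 2 <= 1 by nra.
apply/andP; split; nra.
Qed.

Lemma exists_min (R : realType) n (adj : rel 'I_n) (Hdeg : forall w, (0 < deg adj w)%N)
  (w0 : 'I_n) :
  exists g : 'I_n -> R, nrm adj g = 1 /\
    forall f, qf adj g * nrm adj f <= qf adj f.
Proof.
pose N (v : 'rV[R]_n) := nrm adj (fun i => v ord0 i).
pose Q (v : 'rV[R]_n) := qf adj (fun i => v ord0 i).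
pose B := [set v : 'rV[R]_n | forall i, (fun=> `[-1, 1]) i (v ord0 i)].
pose A := B `&` (N @^-1` [set x | x = 1]).
have cB : compact B.
  exact: (@rV_compact R n (fun=> `[-1, 1]) (fun _ => @segment_compact R (-1) 1)).
have clN : closed (N @^-1` [set x | x = 1]).
  apply: preimage_closed; last exact: closed_eq.
  by move=> v _; exact: cont_N.
have cA : compact A by exact: compact_closedI.
have norm1 : forall f : 'I_n -> R, 0 < nrm adj f ->
    let c := (Num.sqrt (nrm adj f))^-1 in
    A (\row_i (c * f i)) /\ Q (\row_i (c * f i)) = c ^+ 2 * qf adj f
    /\ c ^+ 2 * nrm adj f = 1.
  move=> f hf c.
  have hc : c ^+ 2 * nrm adj f = 1.
    by rewrite /c exprVn sqr_sqrtr ?ltW // mulVf // gt_eqF.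
  have eqf : (fun i => (\row_i0 (c * f i0)) ord0 i) = (fun i => c * f i).
    by apply: funext => i; rewrite mxE.
  have hN : N (\row_i (c * f i)) = 1 by rewrite /N eqf nrm_scale.
  split; last by split => //; rewrite /Q eqf qf_scale.
  split => //.
  move=> i /=; have := in_box Hdeg hN i.
  by rewrite /= in_itv /=.
have [f0 hf0] : exists f0 : 'I_n -> R, 0 < nrm adj f0.
  exists (fun i => if i == w0 then 1 else 0).
  rewrite /nrm (bigD1 w0) //= eqxx expr1n mulr1.
  rewrite big1 ?addr0 ?ltr0n ?Hdeg // => w /negbTE ->.
  by rewrite expr0n mulr0.
have A0 : A !=set0 by have [hA _] := norm1 f0 hf0; eexists; exact: hA.
have [g gA gmin] := compact_EVT_min A0 cA (continuous_subspaceT (@cont_Q R n adj)).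
exists (fun i => g ord0 i).
have [_ gN] : A g by rewrite inE in gA.
split; first exact: gN.
move=> f.
have [hf|hf] := eqVneq (nrm adj f) 0.
  by rewrite hf mulr0 qf_ge0.
have hf' : 0 < nrm adj f by rewrite lt0r hf nrm_ge0.
have [hA [hQ hc]] := norm1 f hf'.
set c := (Num.sqrt (nrm adj f))^-1 in hA hQ hc.
have hle : qf adj (fun i => g ord0 i) <= c ^+ 2 * qf adj f.
  by rewrite -hQ; exact: gmin _ (mem_set hA).
have hc2 : 0 < c ^+ 2.
  by rewrite exprn_gt0 // /c invr_gt0 sqrtr_gt0.
rewrite -(ler_pM2l hc2) mulrCA hc mulr1.
exact: hle.
Qed.

Lemma sum_ind (R : realType) n (A : {set 'I_n}) x :
  \sum_(y in A) ((y == x)%:R : R) = (x \in A)%:R.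
Proof.
case: (boolP (x \in A)) => hx.
  rewrite (bigD1 x) //= eqxx big1 ?addr0 // => y /andP[_ /negbTE ->] //.
rewrite big1 // => y hy; case: eqP => // e; move: hx; by rewrite -e hy.
Qed.

Lemma PPg (R : realType) n (adj : rel 'I_n) (Hsym : symmetric adj)
  (Hdeg : forall w, (0 < deg adj w)%N) (g : 'I_n -> R) :
  nrm adj g = 1 -> (forall f, qf adj g * nrm adj f <= qf adj f) ->
  forall x, Pf adj (Pf adj g) x = qf adj g * g x.
Proof.
move=> gN gmin x.
set m := qf adj g.
pose Bh (h : 'I_n -> R) := \sum_w (deg adj w)%:R * (Pf adj g w * Pf adj h w).
pose Ch (h : 'I_n -> R) := \sum_w (deg adj w)%:R * (g w * h w).
have stat : forall h, Bh h = m * Ch h.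
  move=> h.
  suff: 2 * (Bh h - m * Ch h) = 0 by move/eqP; rewrite mulf_eq0 pnatr_eq0 /= subr_eq0 => /eqP.
  apply: (@lin_quad0 R _ (qf adj h - m * nrm adj h)) => t.
  have := gmin (fun i => g i + t * h i).
  have -> : nrm adj (fun i => g i + t * h i) = nrm adj g + 2 * t * Ch h + t ^+ 2 * nrm adj h.
    by rewrite /nrm wsum_expand.
  have -> : qf adj (fun i => g i + t * h i) = qf adj g + 2 * t * Bh h + t ^+ 2 * qf adj h.
    rewrite /qf -(wsum_expand (fun w => (deg adj w)%:R)).
    by apply: eq_bigr => w _; rewrite Pf_lin.
  rewrite gN -/m => H.
  have -> : 2 * (Bh h - m * Ch h) * t + (qf adj h - m * nrm adj h) * t ^+ 2 =
    (m + 2 * t * Bh h + t ^+ 2 * qf adj h) - m * (1 + 2 * t * Ch h + t ^+ 2 * nrm adj h) by ring.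
  by rewrite subr_ge0.
pose d := fun i : 'I_n => ((i == x)%:R : R).
have hB : Bh d = \sum_(w in nbhd adj x) Pf adj g w.
  rewrite /Bh [RHS]big_mkcond /=; apply: eq_bigr => w _.
  have -> : Pf adj d w = (deg adj w)%:R^-1 * (x \in nbhd adj w)%:R by rewrite /Pf /d sum_ind.
  have hw : (deg adj w)%:R != 0 :> R by rewrite pnatr_eq0 -lt0n Hdeg.
  have -> : (x \in nbhd adj w) = (w \in nbhd adj x) by rewrite !inE Hsym.
  case: (w \in nbhd adj x); rewrite ?mulr0 ?mul0r // mulr1.
  by rewrite mulrCA mulfV // mulr1.
have hC : Ch d = (deg adj x)%:R * g x.
  rewrite /Ch (bigD1 x) //= /d eqxx mulr1 big1 ?addr0 // => w /negbTE ->.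
  by rewrite mulr0 mulr0.
have := stat d; rewrite hB hC => e.
rewrite /Pf -/(Pf adj g) e.
have hx : (deg adj x)%:R != 0 :> R by rewrite pnatr_eq0 -lt0n Hdeg.
by rewrite mulrCA [_^-1 * _]mulrA mulVf // mul1r.
Qed.

Lemma nrm_gt0 (R : realType) n (adj : rel 'I_n) (Hdeg : forall w, (0 < deg adj w)%N)
  (f : 'I_n -> R) w : f w != 0 -> 0 < nrm adj f.
Proof.
move=> hw; rewrite /nrm (bigD1 w) //=.
have h1 : 0 < (deg adj w)%:R * f w ^+ 2.
  by rewrite mulr_gt0 ?ltr0n ?Hdeg // exprn_even_gt0.
have h2 : 0 <= \sum_(i | i != w) (deg adj i)%:R * f i ^+ 2.
  by apply: sumr_ge0 => i _; rewrite mulr_ge0 // sqr_ge0.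
lra.
Qed.

Lemma key (R : realType) n (adj : rel 'I_n) (Hsym : symmetric adj)
  (Hdeg : forall w, (0 < deg adj w)%N) (w0 : 'I_n)
  (Heps : forall lam : R, lap_eigenvalue adj lam -> 1 / 2 < `|1 - lam|) :
  forall f : 'I_n -> R, (exists w, f w != 0) -> nrm adj f < 4 * qf adj f.
Proof.
have [g [gN gmin]] := @exists_min R n adj Hdeg w0.
have hPP := PPg Hsym Hdeg gN gmin.
set m := qf adj g in hPP gmin.
have m0 : 0 <= m := qf_ge0 _ _.
set s := Num.sqrt m.
have s0 : 0 <= s := sqrtr_ge0 _.
have hs2 : s ^+ 2 = m := sqr_sqrtr m0.
have [w gw | gz] := pickP (fun w => g w != 0); last first.
  exfalso; have : nrm adj g = 0.
    rewrite /nrm big1 // => w _.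
    by have := gz w; rewrite /= => /negbFE/eqP ->; rewrite expr0n mulr0.
  by rewrite gN => /eqP; rewrite oner_eq0.
have shalf : 1 / 2 < s.
  pose k := fun x => Pf adj g x + s * g x.
  have [x hx | hk] := pickP (fun x => k x != 0).
    have : lap_eigenvalue adj (1 - s).
      exists k; split; first by exists x.
      move=> y; rewrite /norm_laplacian -[(deg adj y)%:R^-1 * _]/(Pf adj k y).
      rewrite /k Pf_lin hPP -hs2; ring.
    move/Heps; have -> : 1 - (1 - s) = s by ring.
    by rewrite ger0_norm.
  have hk' : forall y, Pf adj g y = - (s * g y).
    move=> y; have := hk y; rewrite /= /k => /negbFE/eqP e.
    by apply/eqP; rewrite -addr_eq0 e.
  have : lap_eigenvalue adj (1 + s).
    exists g; split; first by exists w.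
    move=> y; rewrite /norm_laplacian -[(deg adj y)%:R^-1 * _]/(Pf adj g y).
    rewrite hk'; ring.
  move/Heps; have -> : 1 - (1 + s) = - s by ring.
  by rewrite normrN ger0_norm.
have m4 : 1 < 4 * m by rewrite -hs2; nra.
move=> f [v fv].
have hn := nrm_gt0 Hdeg fv.
have := gmin f.
nra.
Qed.

Local Close Scope classical_set_scope.
From mathcomp Require Import finset.
Require Import Defs.

Lemma sum_delta (R : realType) n (F : 'I_n -> R) x :
  \sum_w F w * (w == x)%:R = F x.
Proof.
rewrite (bigD1 x) //= eqxx mulr1 big1 ?addr0 // => w /negbTE ->; by rewrite mulr0.
Qed.

Lemma deg_pos n (adj : rel 'I_n) (Hconn : connected_graph adj) (HN : (3 <= n)%N) :
  forall w, (0 < deg adj w)%N.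
Proof.
move=> w.
have h0 : (0 < n)%N by lia.
have h1 : (1 < n)%N by lia.
pose x : 'I_n := if val w == 0%N then Ordinal h1 else Ordinal h0.
have wx : w != x.
  apply/negP => /eqP ew; have := congr1 val ew; rewrite /x.
  case: (val w =P 0%N) => e /=.
  - by move=> h; move: e; change (\val w) with (nat_of_ord w); rewrite h.
  - by move=> h; apply: e; change (\val w) with (nat_of_ord w); rewrite h.
have := Hconn w x => /connectP [p hp hl].
case: p hp hl => [|y p] /=.
  by move=> _ e; rewrite e eqxx in wx.
move=> /andP [hy _] _.
apply/card_gt0P; exists y; by rewrite inE.
Qed.

Theorem mainTheorem14 (R : realType) (n : nat) (adj : rel 'I_n)
  (Hsimple : simple_graph adj) (Hconn : connected_graph adj) (HN : (3 <= n)%N)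
  (Heps : forall lam : R, lap_eigenvalue adj lam -> 1 / 2 < `|1 - lam|)
  (u v : 'I_n) (Huv : u != v) (Hcommon : nbhd adj u :&: nbhd adj v != set0) :
  symdiff (nbhd adj u) (nbhd adj v) != set0 /\
  1 / 2 < \sum_(w in symdiff (nbhd adj u) (nbhd adj v))
            ((deg adj w)%:R^-1 - 1 / 4 : R).
Proof.
have [Hsym _] := Hsimple.
have Hdeg := deg_pos Hconn HN.
set sd := symdiff (nbhd adj u) (nbhd adj v).
pose f := fun i : 'I_n => ((i == u)%:R - (i == v)%:R : R).
have fu : f u != 0 by rewrite /f eqxx (negbTE Huv) subr0 oner_eq0.
have hk := key Hsym Hdeg u Heps (ex_intro _ u fu).
have hn : nrm adj f = (deg adj u)%:R + (deg adj v)%:R.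
  rewrite /nrm.
  have -> : \sum_w (deg adj w)%:R * f w ^+ 2 =
      \sum_w ((deg adj w)%:R * (w == u)%:R + (deg adj w)%:R * (w == v)%:R).
    apply: eq_bigr => w _; rewrite /f.
    case: (eqVneq w u) => [wu|wu]; case: (eqVneq w v) => [wv|wv].
    - by move: Huv; rewrite -wu -wv eqxx.
    - by rewrite wu ?eqxx ?(negbTE Huv) /=; ring.
    - by rewrite ?wv ?eqxx /=; ring.
    - by rewrite /=; ring.
  by rewrite big_split /= !sum_delta.
have hq : qf adj f = \sum_(w in sd) (deg adj w)%:R^-1.
  rewrite /qf [RHS]big_mkcond /=; apply: eq_bigr => w _.
  have -> : Pf adj f w = (deg adj w)%:R^-1 * ((w \in nbhd adj u)%:R - (w \in nbhd adj v)%:R).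
    rewrite /Pf /f sumrB !sum_ind !inE (Hsym w u) (Hsym w v) //.
  have hw : (deg adj w)%:R != 0 :> R by rewrite pnatr_eq0 -lt0n Hdeg.
  rewrite /sd /symdiff !inE.
  case: (adj u w); case: (adj v w) => /=;
    rewrite ?subrr ?subr0 ?sub0r ?mulr0 ?expr0n ?mulr0 ?mul0r //; field; exact: hw.
rewrite hn hq in hk.
have hcard : (#|sd| + 2 <= deg adj u + deg adj v)%N.
  have h1 : #|sd| = (#|nbhd adj u :\: nbhd adj v| + #|nbhd adj v :\: nbhd adj u|)%N.
    rewrite /sd /symdiff cardsU.
    have -> : (nbhd adj u :\: nbhd adj v) :&: (nbhd adj v :\: nbhd adj u) = set0.
      apply/setP => w; rewrite !inE.
      by case: (adj u w); case: (adj v w).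
    by rewrite cards0 subn0.
  have h2 := cardsID (nbhd adj v) (nbhd adj u).
  have h3 := cardsID (nbhd adj u) (nbhd adj v).
  have h4 : (0 < #|nbhd adj u :&: nbhd adj v|)%N.
    by rewrite card_gt0.
  rewrite setIC in h3.
  rewrite /deg; lia.
have hcardR : (#|sd|%:R + 2 <= (deg adj u)%:R + (deg adj v)%:R :> R).
  have := hcard; rewrite -(ler_nat R) !natrD => h; exact: h.
have main : 1 / 2 < \sum_(w in sd) ((deg adj w)%:R^-1 - 1 / 4 : R).
  rewrite sumrB sumr_const -mulr_natr.
  lra.
split => //.
apply/negP => /eqP e; move: main.
rewrite e big_set0; lra.
Qed.
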